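(* Let $n\ge3$ and suppose $T=T_\lambda(r,m)$ acts linearly and inner faithfully on $\Bbbk\overline{Q}$ so that $g$ acts by a reflection: $g\cdot e_i=e_{n-(d+i)}$, $g\cdot a_i=\mu_ia^*_{n-(d+i+1)}$, $g\cdot a_i^*=\mu_i^*a_{n-(d+i+1)}$ for some integer $0<d\le n-1$ and $\mu_i,\mu_i^*\in\Bbbk^\times$. Let $\sigma$ be the quiver-Taft map. If $j$ is a vertex with $g\cdot j=j$ and $c_j,c_j^*\in\Bbbk$ satisfy $\sigma(a_j)=c_ja^*_{j-1}$ and $\sigma(a_j^* )=c_j^*a_j^*$, then $$c_j^2=\mu_j(\mu^*_{j-1})^{-1}\gamma_{j-1}^2,\qquad (c_j^* )^2=\mu_j^*\mu_{j-1}\gamma_{j-1}^2.$$ For every $i$ such that neither $i$ nor $i+1$ is fixed by $g$, $$\gamma_{i+1}^2=(\mu_i\mu^*_{n-(d+i+1)})\gamma_i^2=(\mu_i^*\mu_{n-(d+i+1)})^{-1}\gamma_i^2.$$ Consequently, either $\gamma_i=0$ for all $i$, or $\gamma_i\neq0$ for all $i$ with $g\cdot i\neq i$.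
   Context: Let $\Bbbk$ be a field, $r>1$ and $m$ positive integers with $r\mid m$, and $\lambda\in\Bbbk$ a primitive $r$-th root of unity, with $r$ coprime to the characteristic of $\Bbbk$. The generalized Taft algebra $T=T_\lambda(r,m)$ is the Hopf algebra generated by $g,x$ with relations $gx=\lambda xg$, $g^m=1$, $x^r=0$, $\Delta(g)=g\otimes g$, $\Delta(x)=1\otimes x+x\otimes g$, $\varepsilon(g)=1,\varepsilon(x)=0$, $S(g)=g^{-1}$, $S(x)=-xg^{-1}$. An action of $T$ on an algebra $A$ is a $T$-module algebra structure; so $g$ acts by an algebra automorphism and $x\cdot(ab)=a(x\cdot b)+(x\cdot a)(g\cdot b)$. It is inner faithful if no nonzero Hopf ideal $I$ of $T$ satisfies $I\cdot A=0$. Vertex indices are taken modulo $n$. $\overline{Q}$ has vertices $0,\dots,n-1$ and arrows $a_i:i\to i+1$, $a_i^*:i+1\to i$; in $\Bbbk\overline{Q}$, $e_i$ is the trivial path at $i$, $s(a),t(a)$ source and target, and $pq$ is concatenation ($p$ then $q$) if $t(p)=s(q)$, else $0$. A linear action: $g$ acts by a path-length-preserving automorphism ($g\cdot e_i=e_{g\cdot i}$) and $x$ maps vertices into the span of vertices and arrows into the span of vertices and arrows. Then there are scalars $\gamma_i$ with $x\cdot e_i=\gamma_ie_i-\gamma_i\lambda^{-1}e_{g\cdot i}$; the quiver-Taft map $\sigma$ is the linear map on the span of vertices and arrows with $\sigma(e_i)=0$ and $\sigma(a)=x\cdot a-\gamma_{t(a)}a+\gamma_{s(a)}\lambda^{-1}(g\cdot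 a)$ for arrows $a$. *)

(* Defs.v *)
From HB Require Import structures.
From mathcomp Require Import all_boot all_order all_algebra.
Set Implicit Arguments. Unset Strict Implicit. Unset Printing Implicit Defensive.
Import Order.TTheory GRing.Theory Num.Theory.
Local Open Scope ring_scope.

(* Arrow (i, false) is a_i : i -> i+1, arrow (i, true) is a_i^* :     *)
(* i+1 -> i.                                                          *)
Definition arrow (n : nat) : finType := ('Z_n * bool)%type.

Definition src n (b : arrow n) : 'Z_n := if b.2 then b.1 + 1 else b.1.
Definition tgt n (b : arrow n) : 'Z_n := if b.2 then b.1 else b.1 + 1.

Fixpoint ok_arrows n (v : 'Z_n) (s : seq (arrow n)) : bool :=
  if s is b :: s' then (src b == v) && ok_arrows (tgt b) s' else true.

Definition ok_path n (p : 'Z_n * seq (arrow n)) : bool := ok_arrows p.1 p.2.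

(* value of a path (p then q is written p * q) *)
Definition pathval (K : fieldType) (A : algType K) n (e : 'Z_n -> A)
    (arr : arrow n -> A) (p : 'Z_n * seq (arrow n)) : A :=
  e p.1 * \prod_(b <- p.2) arr b.

(* A, with trivial paths e and arrows arr, is (isomorphic to) the path
   algebra k Qbar: the standard presentation relations hold, and the
   paths form a K-basis of A. *)
Record is_path_algebra (K : fieldType) (A : algType K) n (e : 'Z_n -> A)
    (arr : arrow n -> A) : Prop := {
  pa_idem : forall i j, e i * e j = (if i == j then e i else 0);
  pa_one : \sum_(i : 'Z_n) e i = 1;
  pa_src : forall b, e (src b) * arr b = arr b;
  pa_tgt : forall b, arr b * e (tgt b) = arr b;
  pa_free : forall (s : seq ('Z_n * seq (arrow n))) (c : 'Z_n * seq (arrow n) -> K),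
      uniq s -> all (@ok_path n) s ->
      \sum_(p <- s) c p *: pathval e arr p = 0 ->
      forall p, p \in s -> c p = 0;
  pa_span : forall a : A, exists (s : seq ('Z_n * seq (arrow n)))
      (c : 'Z_n * seq (arrow n) -> K),
      all (@ok_path n) s /\ a = \sum_(p <- s) c p *: pathval e arr p }.

Definition in_span_vert (K : fieldType) (A : algType K) n (e : 'Z_n -> A) (a : A) :=
  exists c : 'Z_n -> K, a = \sum_(i : 'Z_n) c i *: e i.
Definition in_span_deg01 (K : fieldType) (A : algType K) n (e : 'Z_n -> A)
    (arr : arrow n -> A) (a : A) :=
  exists (c : 'Z_n -> K) (c' : arrow n -> K),
    a = \sum_(i : 'Z_n) c i *: e i + \sum_(b : arrow n) c' b *: arr b.

(* The generalized Taft algebra T_lam(r,m), written out on its PBW    *)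
(* basis g^i x^j (i < m, j < r): an element is its coefficient matrix *)
(* 'M_(m, r).  Relations: gx = lam xg, g^m = 1, x^r = 0, hence        *)
(* (g^i x^j)(g^k x^l) = lam^(-jk) g^(i+k mod m) x^(j+l) (0 if j+l>=r). *)
Section Taft.
Variables (K : fieldType) (lam : K) (m r : nat).
Local Notation T := 'M[K]_(m, r).

Definition tmul (y z : T) : T :=
  \matrix_(p < m, q < r) \sum_(i < m) \sum_(j < r) \sum_(k < m) \sum_(l < r)
    (if (p == ((i + k) %% m)%N :> nat) && (q == (j + l)%N :> nat)
     then y i j * z k l * lam^-1 ^+ (j * k)%N else 0).

Definition tunit : T := \matrix_(i < m, j < r) ((i == 0%N :> nat) && (j == 0%N :> nat))%:R.
Definition tg : T := \matrix_(i < m, j < r) ((i == (1 %% m)%N :> nat) && (j == 0%N :> nat))%:R.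
Definition tx : T := \matrix_(i < m, j < r) ((i == 0%N :> nat) && (j == 1%N :> nat))%:R.
Definition tpow (y : T) (k : nat) : T := iter k (tmul y) tunit.

(* T (x) T, with u (x) v represented by the outer product of coordinates *)
Definition tens (u v : T) : 'M[K]_(m * r, m * r) := (mxvec u)^T *m mxvec v.
Definition tbasis (p : 'I_(m * r)) : T := vec_mx (delta_mx 0 p).
Definition ttmul (M N : 'M[K]_(m * r, m * r)) : 'M[K]_(m * r, m * r) :=
  \sum_(p1 < m * r) \sum_(q1 < m * r) \sum_(p2 < m * r) \sum_(q2 < m * r)
    (M p1 q1 * N p2 q2) *: tens (tmul (tbasis p1) (tbasis p2)) (tmul (tbasis q1) (tbasis q2)).
Definition ttpow (M : 'M[K]_(m * r, m * r)) (k : nat) :=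
  iter k (ttmul M) (tens tunit tunit).

(* comultiplication: algebra map with Delta g = g(x)g, Delta x = 1(x)x + x(x)g *)
Definition tDelta (y : T) : 'M[K]_(m * r, m * r) :=
  \sum_(i < m) \sum_(j < r) y i j *:
     ttmul (ttpow (tens tg tg) i) (ttpow (tens tunit tx + tens tx tg) j).
Definition teps (y : T) : K := \sum_(i < m) \sum_(j < r) (j == 0%N :> nat)%:R * y i j.
(* antipode: anti-algebra map with S g = g^-1 = g^(m-1), S x = - x g^-1 *)
Definition tginv : T := tpow tg m.-1.
Definition tS (y : T) : T :=
  \sum_(i < m) \sum_(j < r) y i j *: tmul (tpow (- tmul tx tginv) j) (tpow tginv i).

Definition hopf_ideal (I : {vspace T}) : Prop :=
  [/\ forall t y, y \in I -> tmul t y \in I /\ tmul y t \in I,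
      forall y, y \in I -> exists s : seq (T * T),
          all (fun p => (p.1 \in I) || (p.2 \in I)) s /\
          tDelta y = \sum_(p <- s) tens p.1 p.2,
      forall y, y \in I -> teps y = 0
    & forall y, y \in I -> tS y \in I].

End Taft.

(* T-module-algebra structure on A: g acts by G, x acts by X. *)
Definition taft_module_algebra (K : fieldType) (A : algType K) (lam : K) (m r : nat)
    (G X : {linear A -> A}) : Prop :=
  [/\ (forall a b, G (a * b) = G a * G b) /\ G 1 = 1,
      (forall a b, X (a * b) = a * X b + X a * G b) /\ X 1 = 0,
      forall a, G (X a) = lam *: X (G a),
      forall a, iter m G a = a
    & forall a, iter r X a = 0].

Definition tact (K : fieldType) (A : algType K) (m r : nat)
    (G X : {linear A -> A}) (y : 'M[K]_(m, r)) (a : A) : A :=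
  \sum_(i < m) \sum_(j < r) y i j *: iter i G (iter j X a).

Definition inner_faithful (K : fieldType) (A : algType K) (lam : K) (m r : nat)
    (G X : {linear A -> A}) : Prop :=
  forall I : {vspace 'M[K]_(m, r)}, hopf_ideal lam I ->
    (forall y a, y \in I -> tact G X y a = 0) -> I = 0%VS.

Definition qsigma (K : fieldType) (A : algType K) n (lam : K) (G X : {linear A -> A})
    (arr : arrow n -> A) (gam : 'Z_n -> K) (b : arrow n) : A :=
  X (arr b) - gam (tgt b) *: arr b + (gam (src b) / lam) *: G (arr b).

(* Main.v *)
Require Import Defs.
From HB Require Import structures.
From mathcomp Require Import all_boot all_order all_algebra ring.
Import GRing.Theory.
Local Open Scope ring_scope.

Theorem lemma3p12
  (K : fieldType) (r m : nat) (lam : K)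
  (hr : (1 < r)%N) (hrm : (r %| m)%N) (hlam : r.-primitive_root lam)
  (hchar : (r%:R : K) != 0)
  (n : nat) (hn : (3 <= n)%N)
  (A : algType K) (e : 'Z_n -> A) (arr : arrow n -> A)
  (hA : is_path_algebra e arr)
  (G X : {linear A -> A})
  (hact : taft_module_algebra lam m r G X)
  (hif : inner_faithful lam m r G X)
  (d : nat) (hd0 : (0 < d)%N) (hd1 : (d <= n - 1)%N)
  (mu mus : 'Z_n -> K) (hmu : forall i, mu i != 0) (hmus : forall i, mus i != 0)
  (hGe : forall i, G (e i) = e (- (d%:R + i)))
  (hGa : forall i, G (arr (i, false)) = mu i *: arr (- (d%:R + i + 1), true))
  (hGas : forall i, G (arr (i, true)) = mus i *: arr (- (d%:R + i + 1), false))
  (hXe : forall i, in_span_vert e (X (e i)))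
  (hXa : forall b, in_span_deg01 e arr (X (arr b)))
  (gam : 'Z_n -> K)
  (hgam : forall i, X (e i) = gam i *: e i - (gam i / lam) *: e (- (d%:R + i))) :
  (forall j : 'Z_n, - (d%:R + j) = j ->
     forall c cs : K,
       qsigma lam G X arr gam (j, false) = c *: arr (j - 1, true) ->
       qsigma lam G X arr gam (j, true) = cs *: arr (j, true) ->
       c ^+ 2 = mu j / mus (j - 1) * gam (j - 1) ^+ 2 /\
       cs ^+ 2 = mus j * mu (j - 1) * gam (j - 1) ^+ 2)
  /\
  (forall i : 'Z_n, - (d%:R + i) != i -> - (d%:R + (i + 1)) != i + 1 ->
     gam (i + 1) ^+ 2 = mu i * mus (- (d%:R + i + 1)) * gam i ^+ 2 /\
     gam (i + 1) ^+ 2 = (mus i * mu (- (d%:R + i + 1)))^-1 * gam i ^+ 2)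
  /\
  ((forall i, gam i = 0) \/ (forall i, - (d%:R + i) != i -> gam i != 0)).
Proof.
have hn1 : (1 < n)%N by apply: leq_trans hn.
have two0 : (2%:R : 'Z_n) != 0.
  apply/eqP => /(congr1 val) /=.
  rewrite Zp_cast // !(@modn_small 1) ?(@modn_small 2) //; by apply: leq_trans hn.
case: hA => hidem hone hsrc htgt hfree hspan.
case: hact => [[GM G1] [XL X1] GX Gm Xr].
have eii : forall i, e i * e i = e i by move=> i; rewrite hidem eqxx.
have eij : forall i j, i != j -> e i * e j = 0 by move=> i j h; rewrite hidem (negbTE h).
have ebl : forall x b, x != src b -> e x * arr b = 0.
  by move=> x b h; rewrite -(hsrc b) mulrA eij // mul0r.
have ebr : forall y b, y != tgt b -> arr b * e y = 0.
  by move=> y b h; rewrite -(htgt b) -mulrA eij 1?eq_sym // mulr0.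
have e_neq0 : forall i, e i != 0.
  move=> i; apply/eqP => h.
  have := hfree [:: (i, [::])] (fun _ => 1) erefl erefl.
  rewrite big_seq1 scale1r /pathval /= big_nil mulr1 h => /(_ erefl (i, [::])).
  by rewrite inE eqxx => /(_ erefl) /eqP; rewrite oner_eq0.
have arr_neq0 : forall b, arr b != 0.
  move=> b; apply/eqP => h.
  have := hfree [:: (src b, [:: b])] (fun _ => 1) erefl.
  have ok : all (@ok_path n) [:: (src b, [:: b])] by rewrite /= /ok_path /= eqxx.
  move=> /(_ ok).
  rewrite big_seq1 scale1r /pathval /= big_seq1 hsrc h => /(_ erefl (src b, [:: b])).
  by rewrite inE eqxx => /(_ erefl) /eqP; rewrite oner_eq0.
have scI : forall (v : A), v != 0 -> forall (a1 a2 : K), a1 *: v = a2 *: v -> a1 = a2.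
  move=> v hv a1 a2 /eqP; rewrite -subr_eq0 -scalerBl scaler_eq0 (negbTE hv) orbF.
  by rewrite subr_eq0 => /eqP.
have lam_ro : lam ^+ r = 1 := prim_expr_order hlam.
have lam1 : lam != 1.
  apply/eqP => h; have := prim_order_dvd hlam 1; rewrite h expr1n eqxx.
  by rewrite dvdn1 => /eqP hr1; rewrite hr1 in hr.
have lam0 : lam != 0.
  apply/eqP => h; move: lam_ro; rewrite h expr0n.
  have -> : (r == 0%N) = false by case: (r) hr.
  by move/eqP; rewrite eq_sym oner_eq0.
have gg : forall i : 'Z_n, -(d%:R + -(d%:R + i)) = i by move=> i; ring.
have Lg : forall k, gam (-(d%:R + k)) = gam k / lam.
  move=> k; have := GX (e k); rewrite hgam linearB !linearZ /= !hGe gg hgam gg.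
  have [hk|hk] := eqVneq (-(d%:R + k)) k.
    rewrite hk scalerN -!scaleNr -!scalerDl scalerA => /(scI _ (e_neq0 k)) h.
    suff -> : gam k = 0 by rewrite mul0r.
    have h1 : (gam k - gam k / lam) * (1 - lam) = 0.
      by rewrite mulrBr mulr1 {1}h mulrC subrr.
    move/eqP: h1; rewrite mulf_eq0 (subr_eq0 1) [1 == lam]eq_sym (negbTE lam1) orbF.
    rewrite -{1}(mulr1 (gam k)) -mulrBr mulf_eq0 => /orP [/eqP //|].
    rewrite subr_eq0 => /eqP h3; exfalso.
    by move: lam1; rewrite -[lam]invrK -h3 invr1 eqxx.
  move/(congr1 (fun z => e k * z)) => /=.
  rewrite mulrDr -!scalerAr mulrN eii eij 1?eq_sym // mulrBr -!scalerAr eii eij 1?eq_sym //.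
  rewrite !scaler0 add0r sub0r scalerN !scalerN scalerA => /oppr_inj /(scI _ (e_neq0 k)).
  by rewrite mulrCA mulfV // mulr1 => ->.
have fixed0 : forall k, -(d%:R + k) = k -> gam k = 0.
  move=> k hk; have := Lg k; rewrite hk -{1}(mulr1 (gam k)) => /eqP.
  rewrite -subr_eq0 -mulrBr mulf_eq0 subr_eq0 => /orP [/eqP //| /eqP h3].
  by move: lam1; rewrite -[lam]invrK -h3 invr1 eqxx.
have hcase : (lam = -1 /\ forall a, X (X a) = 0) \/ (forall k, gam k = 0).
  have [l2|l2] := eqVneq (lam ^+ 2) 1.
    left; have r2 : r = 2%N.
      have h : (r %| 2)%N by rewrite (prim_order_dvd hlam) l2.
      by apply/eqP; rewrite eqn_leq dvdn_leq //=.
    split; last by move=> a; have := Xr a; rewrite r2.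
    by move/eqP: l2; rewrite sqrf_eq1 (negbTE lam1) /= => /eqP.
  right => k; have := Lg (-(d%:R + k)); rewrite gg Lg => h.
  move/eqP: h; rewrite -{1}(mulr1 (gam k)) -mulrA -subr_eq0 -mulrBr mulf_eq0.
  case/orP => [/eqP //|]; rewrite subr_eq0 => /eqP h3; exfalso.
  have e2 : lam ^+ 2 * (lam^-1 * lam^-1) = 1 by field; auto.
  by move: l2; rewrite -h3 mulr1 in e2; rewrite e2 eqxx.
have Nil : forall u, u != 0 -> forall q, X (X u) = q *: u -> q = 0.
  move=> u hu q hq.
  have it : forall k, iter (k.*2) X u = q ^+ k *: u.
    elim=> [|k IH]; first by rewrite scale1r.
    by rewrite doubleS !iterS IH !linearZ /= hq scalerA exprSr.
  have := it r; rewrite -addnn iterD Xr => /esym /eqP.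
  rewrite scaler_eq0 (negbTE hu) orbF expf_eq0 => /andP [_ /eqP //].
split.
  move=> j hj c cs hc hcs.
  have gj0 := fixed0 j hj.
  have jm1 : -(d%:R + j + 1) = j - 1 by rewrite -{2}hj; ring.
  have jp1 : -(d%:R + (j - 1) + 1) = j by rewrite -{2}hj; ring.
  have gjj : gam (j + 1) = lam * gam (j - 1).
    have := Lg (j + 1); have -> : -(d%:R + (j + 1)) = j - 1 by rewrite -{2}hj; ring.
    by move=> ->; rewrite mulrC mulfVK.
  have jne : j + 1 != j - 1.
    apply: contra two0 => /eqP h; apply/eqP.
    have -> : (2%:R : 'Z_n) = (j + 1) - (j - 1) by ring.
    by rewrite h subrr.
  split.
    have Ga : G (arr (j, false)) = mu j *: arr (j - 1, true) by rewrite hGa jm1.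
    have Gb : G (arr (j - 1, true)) = mus (j - 1) *: arr (j, false) by rewrite hGas jp1.
    have Xa : X (arr (j, false)) = c *: arr (j - 1, true) + (lam * gam (j - 1)) *: arr (j, false).
      move: hc; rewrite /qsigma /src /tgt /= gj0 mul0r scale0r addr0.
      by move/eqP; rewrite subr_eq gjj => /eqP.
    have lm0 : lam * mu j != 0 by rewrite mulf_neq0.
    have Xb : X (arr (j - 1, true)) = (c * mus (j - 1) / (lam * mu j)) *: arr (j, false)
                + gam (j - 1) *: arr (j - 1, true).
      apply: (scalerI lm0) => /=.
      have := GX (arr (j, false)); rewrite Ga linearZ /= Xa linearD !linearZ /= Ga Gb.
      rewrite scalerA [mu j * lam]mulrC => E; rewrite -E scalerDr !scalerA.
      congr (_ *: _ + _ *: _); first by rewrite [RHS]mulrC mulfVK.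
      by ring.
    have ta : arr (j, false) * e (j + 1) = arr (j, false) := htgt (j, false).
    have tb : arr (j - 1, true) * e (j + 1) = 0 := ebr (j + 1) (j - 1, true) jne.
    have X2a : X (X (arr (j, false))) * e (j + 1) =
      (c * (c * mus (j - 1) / (lam * mu j)) + (lam * gam (j - 1)) ^+ 2) *: arr (j, false).
      by rewrite Xa linearD !linearZ /= Xa Xb !mulrDl -!scalerAl !mulrDl -!scalerAl !ta !tb !scaler0 !addr0 add0r !scalerA -scalerDl expr2.
    case: hcase => [[lamN X2]|gz].
      have := X2a; rewrite X2 mul0r => /esym /eqP.
      rewrite scaler_eq0 (negbTE (arr_neq0 _)) orbF lamN addr_eq0 => /eqP h.
      have -> : c ^+ 2 = c * (c * mus (j - 1) / (-1 * mu j)) * (- mu j / mus (j - 1)).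
        by field; rewrite ?hmu ?hmus ?lam0 ?oppr_eq0 ?oner_eq0.
      by rewrite h; field; rewrite ?hmu ?hmus ?lam0 ?oppr_eq0 ?oner_eq0.
    have c0 : c = 0.
      have h := Nil _ (arr_neq0 (j, false)) (c * (c * mus (j - 1) / (lam * mu j))).
      move: h; rewrite Xa gz mulr0 scale0r addr0 linearZ /= Xb gz scale0r addr0 scalerA.
      move=> /(_ erefl) /eqP; rewrite !mulf_eq0 invr_eq0 (negbTE lm0) (negbTE (hmus _)) !orbF orbb.
      by move/eqP.
    by rewrite c0 gz expr0n /= mulr0.
  have Ga : G (arr (j, true)) = mus j *: arr (j - 1, false) by rewrite hGas jm1.
  have Gb : G (arr (j - 1, false)) = mu (j - 1) *: arr (j, true) by rewrite hGa jp1.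
  have Xa : X (arr (j, true)) = cs *: arr (j, true) - (gam (j - 1) * mus j) *: arr (j - 1, false).
    move: hcs; rewrite /qsigma /src /tgt /= gj0 scale0r subr0 Ga gjj [lam * _]mulrC mulfK //.
    rewrite scalerA => /(congr1 (fun z => z - (gam (j - 1) * mus j) *: arr (j - 1, false))).
    by rewrite addrK.
  have lm0 : lam * mus j != 0 by rewrite mulf_neq0.
  have Xb : X (arr (j - 1, false)) = (cs / lam) *: arr (j - 1, false)
              - (gam (j - 1) * mu (j - 1) / lam) *: arr (j, true).
    apply: (scalerI lm0) => /=.
    have := GX (arr (j, true)); rewrite Ga linearZ /= Xa linearB !linearZ /= Ga Gb.
    rewrite scalerA [mus j * lam]mulrC => E; rewrite -E !scalerN scalerBr !scalerA.
    congr (_ *: _ - _ *: _); last by field; rewrite ?hmu ?hmus ?lam0.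
    by field; rewrite ?hmu ?hmus ?lam0.
  have sa : e (j + 1) * arr (j, true) = arr (j, true) := hsrc (j, true).
  have sb : e (j + 1) * arr (j - 1, false) = 0 := ebl (j + 1) (j - 1, false) jne.
  have X2a : e (j + 1) * X (X (arr (j, true))) =
    (cs * cs + gam (j - 1) * mus j * (gam (j - 1) * mu (j - 1) / lam)) *: arr (j, true).
    by rewrite Xa linearB !linearZ /= Xa Xb ?scalerN ?scalerBr ?scalerN ?scalerA ?opprB ?mulrDr ?mulrBr -?scalerAr ?sa ?sb ?scaler0 ?subr0 ?addr0 ?mulrN -?scalerAr ?sb ?scaler0 ?oppr0 ?addr0 -?scalerDl.
  case: hcase => [[lamN X2]|gz].
    have := X2a; rewrite X2 mulr0 => /esym /eqP.
    rewrite scaler_eq0 (negbTE (arr_neq0 _)) orbF lamN addr_eq0 => /eqP h.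
    rewrite expr2 h; field; rewrite ?hmu ?hmus ?lam0 ?oppr_eq0 ?oner_eq0 //.
  have c0 : cs = 0.
    have h := Nil _ (arr_neq0 (j, true)) (cs * cs).
    move: h; rewrite Xa gz mul0r scale0r subr0 linearZ /= Xa gz mul0r scale0r subr0 scalerA.
    by move=> /(_ erefl) /eqP; rewrite mulf_eq0 orbb => /eqP.
  by rewrite c0 gz expr0n /= mulr0.
have st : forall b : arrow n, src b != tgt b.
  move=> [k []]; rewrite /src /tgt /=; apply/eqP => h.
    have : (1 : 'Z_n) = (k + 1) - k by ring.
    by rewrite h subrr => /eqP; rewrite oner_eq0.
  have : (1 : 'Z_n) = (k + 1) - k by ring.
  by rewrite -h subrr => /eqP; rewrite oner_eq0.
have P2 : lam = -1 -> (forall a, X (X a) = 0) ->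
  forall (b : arrow n) (nu : K),
  -(d%:R + src b) != src b -> -(d%:R + tgt b) != tgt b ->
  (forall x : arrow n, src x = src b -> tgt x != -(d%:R + tgt b)) ->
  G (G (arr b)) = nu *: arr b -> gam (tgt b) ^+ 2 = nu * gam (src b) ^+ 2.
  move=> lamN X2 b nu hs ht hx hnu.
  have hst := st b.
  have Gl : G (arr b) = e (-(d%:R + src b)) * G (arr b) by rewrite -hGe -GM hsrc.
  have Gr : G (arr b) = G (arr b) * e (-(d%:R + tgt b)) by rewrite -hGe -GM htgt.
  have esG : e (src b) * G (arr b) = 0 by rewrite Gl mulrA eij 1?eq_sym // mul0r.
  have bgt : arr b * e (-(d%:R + tgt b)) = 0 := ebr _ _ ht.
  have R : X (arr b) = gam (tgt b) *: arr b + X (arr b) * e (-(d%:R + tgt b)).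
    have := XL (arr b) (e (tgt b)).
    rewrite htgt hgam (hGe (tgt b)) mulrBr -!scalerAr htgt bgt scaler0 subr0.
    by move=> h; exact h.
  have L : X (arr b) * e (-(d%:R + tgt b)) =
      e (src b) * X (arr b) * e (-(d%:R + tgt b)) - (gam (src b) / lam) *: G (arr b).
    have := XL (e (src b)) (arr b); rewrite hsrc hgam => h.
    rewrite {1}h mulrBl -!scalerAl esG -Gl scaler0 sub0r mulrDl mulNr -scalerAl -Gr.
    by [].
  have [al W] : exists al, e (src b) * X (arr b) * e (-(d%:R + tgt b)) = al *: e (src b).
    case: (hXa b) => cv [cb hXb].
    have W1 : e (src b) * (\sum_(i : 'Z_n) cv i *: e i) = cv (src b) *: e (src b).
      rewrite mulr_sumr (bigD1 (src b)) //= big1 ?addr0 => [|i hi].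
        by rewrite -scalerAr eii.
      by rewrite -scalerAr eij 1?eq_sym // scaler0.
    have W2 : e (src b) * (\sum_(x : arrow n) cb x *: arr x) * e (-(d%:R + tgt b)) = 0.
      rewrite mulr_sumr mulr_suml big1 // => x _.
      rewrite -scalerAr -scalerAl.
      have [hsx|hsx] := eqVneq (src x) (src b); last by rewrite ebl 1?eq_sym // mul0r scaler0.
      by rewrite -mulrA ebr ?mulr0 ?scaler0 // eq_sym hx.
    rewrite hXb mulrDr mulrDl W2 addr0 W1 -scalerAl.
    have [e1|e1] := eqVneq (src b) (-(d%:R + tgt b)).
      by exists (cv (src b)); rewrite -e1 eii.
    by exists 0; rewrite eij // scaler0 scale0r.
  have Xbe : X (arr b) = al *: e (src b) + gam (tgt b) *: arr b - (gam (src b) / lam) *: G (arr b).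
    by rewrite {1}R L W addrA [al *: _ + _]addrC.
  have XG : X (G (arr b)) = lam^-1 *: G (X (arr b)) by rewrite GX scalerA mulVf // scale1r.
  have F1 : e (src b) * e (src b) * e (tgt b) = 0 by rewrite eii eij.
  have F2 : e (src b) * e (-(d%:R + src b)) * e (tgt b) = 0 by rewrite eij 1?eq_sym // mul0r.
  have F3 : e (src b) * arr b * e (tgt b) = arr b by rewrite hsrc htgt.
  have F4 : e (src b) * G (arr b) * e (tgt b) = 0 by rewrite esG mul0r.
  have := X2 (arr b).
  rewrite Xbe linearB linearD !linearZ /= XG Xbe.
  rewrite ?linearD ?linearB ?linearZ ?linearN /= hnu (hgam (src b)) (hGe (src b)).
  move/(congr1 (fun z => e (src b) * z * e (tgt b))) => /=; rewrite mulr0 mul0r.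
  do 3 rewrite ?(mulrDr, mulrBr, mulrDl, mulrBl, mulrN, mulNr, scalerN) -?scalerAr -?scalerAl.
  rewrite !F1 !F2 !F3 !F4 ?scaler0 ?oppr0 ?subr0 ?addr0 ?add0r ?sub0r ?opprK ?scalerN ?scalerA.
  rewrite scaler0 add0r -scalerDl => /eqP; rewrite scaler_eq0 (negbTE (arr_neq0 b)) orbF.
  rewrite lamN addr_eq0 => /eqP h.
  by rewrite expr2 h; field; rewrite ?oppr_eq0 ?oner_eq0.
have part2 : forall i : 'Z_n, - (d%:R + i) != i -> - (d%:R + (i + 1)) != i + 1 ->
     gam (i + 1) ^+ 2 = mu i * mus (- (d%:R + i + 1)) * gam i ^+ 2 /\
     gam (i + 1) ^+ 2 = (mus i * mu (- (d%:R + i + 1)))^-1 * gam i ^+ 2.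
  move=> i hi hi1.
  case: hcase => [[lamN X2]|gz]; last by rewrite !gz expr0n /= !mulr0.
  have gi : -(d%:R + -(d%:R + i + 1) + 1) = i by ring.
  split.
    apply: (P2 lamN X2 (i, false)) => //.
      move=> [k []]; rewrite /src /tgt /= => hk.
        apply: contra hi => /eqP hk2; apply/eqP.
        rewrite [LHS](_ : _ = -(d%:R + (i + 1)) + 1); last by ring.
        by rewrite -hk2 hk.
      by rewrite hk eq_sym.
    by rewrite hGa linearZ /= hGas scalerA gi.
  have h : gam i ^+ 2 = mus i * mu (- (d%:R + i + 1)) * gam (i + 1) ^+ 2.
    apply: (P2 lamN X2 (i, true)) => //.
      move=> [k []]; rewrite /src /tgt /= => hk.
        by move/addIr: hk => ->; rewrite eq_sym.
      apply: contra hi1 => /eqP hk2; apply/eqP.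
      rewrite [LHS](_ : _ = -(d%:R + i) - 1); last by ring.
      by rewrite -hk2 hk addrK.
    by rewrite hGas linearZ /= hGa scalerA gi.
  by rewrite h mulrA mulVf ?mul1r // mulf_neq0.
split; first exact: part2.
case: hcase => [[lamN X2]|gz]; last by left.
case: (boolP [forall k, gam k == 0]) => [/forallP hall|/forallPn [k hk]].
  by left => k; apply/eqP.
right.
have step1 : forall i : 'Z_n, -(d%:R + i) != i -> -(d%:R + (i + 1)) != i + 1 ->
    gam i != 0 -> gam (i + 1) != 0.
  move=> i hi hi1 hg; case: (part2 i hi hi1) => E _.
  have : gam (i + 1) ^+ 2 != 0 by rewrite E !mulf_neq0 ?expf_neq0.
  by move=> h2; apply: contra h2 => /eqP ->; rewrite expr0n.
have notboth : forall i : 'Z_n, -(d%:R + i) = i -> -(d%:R + (i + 1)) = i + 1 -> False.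
  move=> i h1 h2; apply: (negP two0); apply/eqP.
  rewrite [LHS](_ : _ = (i + 1) - i - (-(d%:R + (i + 1)) - -(d%:R + i))); last by ring.
  by rewrite h1 h2; ring.
have nf : forall i : 'Z_n, gam i != 0 -> -(d%:R + i) != i.
  by move=> i hg; apply: contra hg => /eqP /fixed0 ->.
pose P (j : nat) := (-(d%:R + (k + j%:R)) == k + j%:R) || (gam (k + j%:R) != 0).
have ind : forall j, P j && P j.+1.
  elim=> [|j /andP [Pj Pj1]].
    rewrite /P addr0 hk orbT /=.
    case: eqP => [//|/eqP h1] /=.
    exact: (step1 k (nf k hk) h1 hk).
  rewrite Pj1 /=; move: Pj Pj1; rewrite /P.
  have -> : k + j.+2%:R = k + j%:R + 1 + 1 by rewrite -!natr1 !addrA.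
  have -> : k + j.+1%:R = k + j%:R + 1 by rewrite -natr1 addrA.
  move: (k + j%:R) => i Pi Pi1.
  case: eqP => [//|/eqP h2] /=.
  move: Pi1; case: eqP => [h1 _|/eqP h1 /= hg]; last exact: step1 (i + 1) h1 h2 hg.
  move: Pi; case: eqP => [h0|_ /= hg]; first by case: (notboth i h0 h1).
  have E : -(d%:R + i) = i + 1 + 1.
    rewrite [LHS](_ : _ = -(d%:R + (i + 1)) + 1); last by ring.
    by apply: (congr1 (fun x => x + 1)); exact: h1.
  have : gam (-(d%:R + i)) != 0 by rewrite Lg mulf_neq0 ?invr_eq0.
  by rewrite E => H; exact: H.
move=> i hi.
have hik : k + (val (i - k))%:R = i.
  by rewrite natr_Zp; ring.
have := ind (val (i - k)); rewrite /P hik (negbTE hi) /=.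
by case/andP.
Qed.
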